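(* For a topological space $X$, the following statements are equivalent: (1) $X$ is a uniformizable Alexandroff space; (2) $\{V(a):a\in X\}$ is a partition of $X$ into open subsets of $X$; (3) there exists a partition $\mathcal P$ of $X$ such that $\mathcal F_{\mathcal P}:=\{\alpha\subseteq X\times X:\bigcup\{D\times D:D\in\mathcal P\}\subseteq\alpha\}$ is a uniform structure compatible with the topology of $X$; (4) $X$ is an Alexandroff space and for all $a\in X$ and all $b\in V(a)$ we have $V(b)=V(a)$; (5) $X$ is an Alexandroff space and the relation $\{(a,b)\in X\times X: V(b)\subseteq V(a)\}$ is an equivalence relation on $X$; (6) the quotient space $X/\Re$ is discrete, where $\Re:=\{(a,b)\in X\times X:V(b)=V(a)\}$ and $X/\Re$ carries the quotient topology with respect to the natural map $\pi:X\to X/\Re$, $\pi(x)=$ the $\Re$-class of $x$.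
   Context: For a topological space $X$ and $a\in X$, $V(a):=\bigcap\{U: U\text{ open}, a\in U\}$. $X$ is an Alexandroff space if $V(a)$ is open for every $a\in X$. A uniform structure $\mathcal F$ on $X$ is a nonempty family of subsets of $X\times X$ such that for each $\alpha\in\mathcal F$: $\Delta_X\subseteq\alpha$; supersets of $\alpha$ in $X\times X$ belong to $\mathcal F$; $\alpha\cap\beta\in\mathcal F$ for $\beta\in\mathcal F$; $\alpha^{-1}\in\mathcal F$; some $\beta\in\mathcal F$ satisfies $\beta\circ\beta\subseteq\alpha$. It induces the topology $\tau_{\mathcal F}=\{U\subseteq X:\forall x\in U\ \exists \alpha\in\mathcal F\ \alpha[x]\subseteq U\}$ with $\alpha[x]=\{y:(x,y)\in\alpha\}$. $\mathcal F$ is compatible with the topology of $X$ if $\tau_{\mathcal F}$ equals that topology; $X$ is uniformizable if some compatible uniform structure exists. *)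

(* Defs.v *)
From HB Require Import structures.
From mathcomp Require Import all_boot all_order.
From mathcomp Require Import boolp classical_sets topology.
Set Implicit Arguments. Unset Strict Implicit. Unset Printing Implicit Defensive.
Local Open Scope classical_set_scope.

Section AlexDefs.
Variable X : topologicalType.

Definition Vn (a : X) : set X := \bigcap_(U in [set U : set X | open U /\ U a]) U.

Definition alexandroff : Prop := forall a : X, open (Vn a).

Definition is_partition (P : set (set X)) : Prop :=
  [/\ forall D, P D -> D !=set0,
      forall D E, P D -> P E -> D <> E -> D `&` E = set0
    & forall x : X, exists2 D, P D & D x].

Definition rel_comp (a b : set (X * X)) : set (X * X) :=
  [set p | exists y, a (p.1, y) /\ b (y, p.2)].

Definition rel_inv (a : set (X * X)) : set (X * X) := [set p | a (p.2, p.1)].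

Definition diagonal : set (X * X) := [set p | p.1 = p.2].

Definition is_uniform_structure (F : set (set (X * X))) : Prop :=
  F !=set0 /\
  forall alpha, F alpha ->
    [/\ diagonal `<=` alpha,
        (forall beta, alpha `<=` beta -> F beta),
        (forall beta, F beta -> F (alpha `&` beta)),
        F (rel_inv alpha)
      & exists2 beta, F beta & rel_comp beta beta `<=` alpha].

Definition uniform_topology (F : set (set (X * X))) : set (set X) :=
  [set U | forall x, U x -> exists2 alpha, F alpha & [set y | alpha (x, y)] `<=` U].

Definition compatible (F : set (set (X * X))) : Prop :=
  uniform_topology F = [set U : set X | open U].

Definition uniformizable : Prop :=
  exists F, is_uniform_structure F /\ compatible F.

Definition FP (P : set (set X)) : set (set (X * X)) :=
  [set alpha | [set p | exists2 D, P D & D p.1 /\ D p.2] `<=` alpha].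

Definition is_equiv_rel (R : X -> X -> Prop) : Prop :=
  [/\ forall a, R a a, forall a b, R a b -> R b a
    & forall a b c, R a b -> R b c -> R a c].

Definition Re_class (x : X) : set X := [set y | Vn y = Vn x].

Definition quotRe : Type := {C : set X | exists x, C = Re_class x}.

Definition piRe (x : X) : quotRe := exist _ (Re_class x) (ex_intro _ x erefl).

Definition quotRe_open (S : set quotRe) : Prop := open (piRe @^-1` S).

Definition quotRe_discrete : Prop := forall S : set quotRe, quotRe_open S.

End AlexDefs.

(* Main.v *)
Require Import Defs.
From HB Require Import structures.
From mathcomp Require Import all_boot all_order.
From mathcomp Require Import boolp classical_sets topology.
Local Open Scope classical_set_scope.
Set Implicit Arguments. Unset Strict Implicit.

Lemma Vn_self (X : topologicalType) (a : X) : Vn a a.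
Proof. by move=> U [_]. Qed.
Arguments Vn_self {X} a.

Lemma Vn_sub (X : topologicalType) (a : X) (U : set X) :
  open U -> U a -> Vn a `<=` U.
Proof. by move=> oU Ua b; apply; split. Qed.

Lemma open_local (X : topologicalType) (W : set X) :
  (forall x, W x -> exists2 V : set X, open V /\ V x & V `<=` W) -> open W.
Proof.
move=> H; rewrite openE => x Wx; have [V [oV Vx] VW] := H x Wx.
apply: (filterS VW); exact: open_nbhs_nbhs.
Qed.

Definition P4 (X : topologicalType) :=
  alexandroff X /\ (forall a b : X, Vn a b -> Vn b = Vn a).

Lemma L14 (X : topologicalType) : alexandroff X /\ uniformizable X -> P4 X.
Proof.
move=> [alx [F [[_ FU] cF]]]; split => // a b Hab.
have sym : Vn b a.
  move=> U [oU Ub].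
  have : uniform_topology F U by rewrite cF.
  move=> /(_ b Ub) [alpha Fa aU].
  have [_ _ _ Fi _] := FU alpha Fa.
  pose W := [set x | exists2 d, F d & [set y | d (x, y)] `<=` [set y | rel_inv alpha (a, y)]].
  have oW : open W.
    have : uniform_topology F W.
      move=> x [d Fd dW].
      have [_ _ _ _ [e Fe ee]] := FU d Fd.
      exists e => // y exy; exists e => // z eyz.
      apply: dW; apply: ee; by exists y.
    by rewrite cF.
  have Wa : W a by exists (rel_inv alpha).
  have [d Fd dW] := Hab W (conj oW Wa).
  have [diag _ _ _ _] := FU d Fd.
  have := dW b (diag (b, b) erefl).
  by move=> /= /aU.
apply/seteqP; split.
  apply: Vn_sub; [exact: alx | exact: Hab].
apply: Vn_sub; [exact: alx | exact: sym].
Qed.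

Lemma L42 (X : topologicalType) : P4 X ->
  is_partition (range (@Vn X)) /\ (forall D, range (@Vn X) D -> open D).
Proof.
move=> [alx H]; split; last by move=> D [a _ <-].
split.
- by move=> D [a _ <-]; exists a; exact: Vn_self.
- move=> D E [a _ <-] [b _ <-] neq; apply/seteqP; split => // c [Hac Hbc].
  by apply: neq; rewrite -(H _ _ Hac) -(H _ _ Hbc).
- by move=> x; exists (Vn x); [exists x | exact: Vn_self].
Qed.

Lemma L24 (X : topologicalType) :
  is_partition (range (@Vn X)) /\ (forall D, range (@Vn X) D -> open D) -> P4 X.
Proof.
move=> [[_ disj _] op]; split; first by move=> a; apply: op; exists a.
move=> a b Hab; case: (pselect (Vn b = Vn a)) => // neq; exfalso.
have := disj (Vn b) (Vn a) (ex_intro2 _ _ b I erefl) (ex_intro2 _ _ a I erefl) neq.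
move=> /seteqP [+ _] => /(_ b) /=; apply; split => //; exact: Vn_self.
Qed.

Lemma L43 (X : topologicalType) : P4 X ->
  exists2 P : set (set X), is_partition P
         & is_uniform_structure (FP P) /\ compatible (FP P).
Proof.
move=> H4; have [alx H] := H4.
exists (range (@Vn X)); first by case: (L42 H4).
set E := [set p : X * X | exists2 D, range (@Vn X) D & D p.1 /\ D p.2].
have EP : forall x y, E (x, y) <-> Vn x y.
  move=> x y; split.
    by move=> [D [c _ <-] /= [cx cy]]; rewrite (H _ _ cx).
  by move=> xy; exists (Vn x); [exists x | split => //; exact: Vn_self].
have FE : FP (range (@Vn X)) E by [].
split.
  split; first by exists setT.
  move=> alpha Ea; split.
  - move=> [x y] xy; have {xy} -> : x = y := xy; apply: Ea; apply/EP; exact: Vn_self.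
  - by move=> beta ab; apply: subset_trans ab.
  - by move=> beta Eb p Ep; split; [apply: Ea | apply: Eb].
  - move=> [x y] /EP xy; apply: Ea; apply/EP; rewrite /= (H _ _ xy); exact: Vn_self.
  - exists E => // [[x z]] [y [/EP xy /EP yz]]; apply: Ea; apply/EP.
    by rewrite /= -(H _ _ xy).
apply/seteqP; split => U /=.
  move=> UU; apply: open_local => x Ux.
  have [alpha Ea aU] := UU x Ux.
  exists (Vn x); first by split; [exact: alx | exact: Vn_self].
  by move=> y xy; apply: aU; apply: Ea; apply/EP.
move=> oU x Ux; exists E => // y /EP xy.
exact: (@Vn_sub X x U oU Ux y xy).
Qed.

Lemma L3alx (X : topologicalType) (P : set (set X)) : is_partition P ->
  compatible (FP P) -> alexandroff X.
Proof.
move=> [_ disj cov] cF x.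
set E := [set p : X * X | exists2 D, P D & D p.1 /\ D p.2].
have FE : FP P E by [].
pose Ex := [set y | E (x, y)].
have oEx : open Ex.
  have : uniform_topology (FP P) Ex.
    rewrite /Ex /E => y /= [D PD [Dx Dy]].
    exists [set p : X * X | exists2 D, P D & D p.1 /\ D p.2] => // z /= [D' PD' [Dy' Dz]].
    case: (pselect (D = D')) => [eq|neq].
      by exists D => //; split => //; rewrite eq.
    exfalso; have := disj _ _ PD PD' neq.
    by move=> /seteqP [+ _] => /(_ y); apply.
  by rewrite cF.
have Exx : Ex x by have [D PD Dx] := cov x; exists D.
suff -> : Vn x = Ex by [].
apply/seteqP; split; first exact: Vn_sub.
move=> y Exy U [oU Ux].
have : uniform_topology (FP P) U by rewrite cF.
move=> /(_ x Ux) [alpha Ea aU]; apply: aU; exact: Ea.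
Qed.

Lemma L34 (X : topologicalType) :
  (exists2 P : set (set X), is_partition P
         & is_uniform_structure (FP P) /\ compatible (FP P)) -> P4 X.
Proof.
move=> [P Pp [u c]]; apply: L14; split; first exact: L3alx Pp c.
by exists (FP P).
Qed.

Lemma L45 (X : topologicalType) : P4 X ->
  alexandroff X /\ is_equiv_rel (fun a b : X => Vn b `<=` Vn a).
Proof.
move=> [alx H]; split => //; split.
- by move=> a.
- move=> a b ba; have := ba b (Vn_self b) => /H ->; exact: subset_refl.
- by move=> a b c ba cb; apply: subset_trans ba.
Qed.

Lemma L54 (X : topologicalType) :
  alexandroff X /\ is_equiv_rel (fun a b : X => Vn b `<=` Vn a) -> P4 X.
Proof.
move=> [alx [_ sym _]]; split => // a b ab.
have ba : Vn b `<=` Vn a by apply: Vn_sub => //; exact: alx.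
apply/seteqP; split => //; exact: sym.
Qed.

Lemma piRe_eq (X : topologicalType) (x y : X) : Vn x = Vn y -> piRe x = piRe y.
Proof.
move=> e; rewrite /piRe.
move: (ex_intro _ x _) (ex_intro _ y _).
have -> : Re_class x = Re_class y by rewrite /Re_class e.
by move=> p q; congr exist; exact: Prop_irrelevance.
Qed.

Lemma piRe_Vn (X : topologicalType) (x y : X) : piRe x = piRe y -> Vn x = Vn y.
Proof.
move=> /(congr1 (@proj1_sig _ _)) /= e.
have : Re_class y x by rewrite -e.
by [].
Qed.

Lemma L46 (X : topologicalType) : P4 X -> quotRe_discrete X.
Proof.
move=> [alx H] S; apply: open_local => x Sx.
exists (Vn x); first by split; [exact: alx | exact: Vn_self].
by move=> y xy; rewrite /= (piRe_eq (H _ _ xy)).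
Qed.

Lemma L64 (X : topologicalType) : quotRe_discrete X -> P4 X.
Proof.
move=> D.
have key : forall a : X, Vn a = (@piRe X) @^-1` [set @piRe X a].
  move=> a; apply/seteqP; split.
    apply: Vn_sub; first exact: D.
    by [].
  move=> y /= /piRe_Vn <-; exact: Vn_self.
split; first by move=> a; rewrite key; exact: D.
move=> a b ab; apply: piRe_Vn; by move: ab; rewrite key.
Qed.

Theorem mainTheorem4 (X : topologicalType) :
  [<-> alexandroff X /\ uniformizable X;
       is_partition (range (@Vn X)) /\ (forall D, range (@Vn X) D -> open D);
       exists2 P : set (set X), is_partition P
         & is_uniform_structure (FP P) /\ compatible (FP P);
       alexandroff X /\ (forall a b : X, Vn a b -> Vn b = Vn a);
       alexandroff X /\ is_equiv_rel (fun a b : X => Vn b `<=` Vn a);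
       quotRe_discrete X].
Proof.
tfae.
- by move=> H; apply: L42; apply: L14.
- by move=> H; apply: L43; apply: L24.
- exact: L34.
- exact: L45.
- by move=> H; apply: L46; apply: L54.
- move=> H; have H4 := L64 H; have [P Pp [u c]] := L43 H4.
  split; first exact: L3alx Pp c.
  by exists (FP P).
Qed.
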